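(* Let $X,Y,Z$ be random variables on finite alphabets $\mathcal{X},\mathcal{Y},\mathcal{Z}$, and let $\operatorname{Un}(X\to Z\mid Y)$ be the unique information defined below. Then $\operatorname{Un}(X\to Z\mid Y)\le H(Z\mid Y)$.
   Context: For each $y\in\mathcal{Y}$ with $\Pr(Y=y)>0$, let $(A_y,B_y,C_y)$ be the random triple on $\mathcal{X}\times\mathcal{Y}\times\mathcal{Z}$ with $\Pr(A_y=x,B_y=y',C_y=z)=0$ if $\Pr(Z=z)=0$ and $\Pr(A_y=x,B_y=y',C_y=z)=\Pr(X=x,Y=y',Z=z)\Pr(Z=z\mid Y=y)/\Pr(Z=z)$ otherwise. The unique information is $\operatorname{Un}(X\to Z\mid Y)=\sum_{y:\Pr(Y=y)>0}\Pr(Y=y)\,I(A_y;C_y)$, where $I$ is mutual information and $H$ Shannon entropy. *)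

(* Defs.v *)
(* R : realType, natural logarithm [ln] from mathcomp-analysis.
   Information quantities are in nats; the inequality is base-independent. *)
From mathcomp Require Import all_boot all_order all_algebra.
From mathcomp Require Import reals exp.
Set Implicit Arguments. Unset Strict Implicit. Unset Printing Implicit Defensive.
Import Order.TTheory GRing.Theory Num.Theory.
Local Open Scope ring_scope.

Section Info.
Variables (R : realType).

Definition mutual_info (A C : finType) (q : A -> C -> R) : R :=
  \sum_(a : A) \sum_(c : C)
     (if q a c == 0 then 0
      else q a c * ln (q a c / ((\sum_(c' : C) q a c') * (\sum_(a' : A) q a' c)))).

Variables (X Y Z : finType) (P : X -> Y -> Z -> R).
(* P x y z = Pr(X=x, Y=y, Z=z) *)

Definition pY (y : Y) : R := \sum_(x : X) \sum_(z : Z) P x y z.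
Definition pZ (z : Z) : R := \sum_(x : X) \sum_(y : Y) P x y z.
Definition pYZ (y : Y) (z : Z) : R := \sum_(x : X) P x y z.

Definition condZY (y : Y) (z : Z) : R := pYZ y z / pY y.

Definition triple_y (y : Y) (x : X) (y' : Y) (z : Z) : R :=
  if pZ z == 0 then 0 else P x y' z * condZY y z / pZ z.

Definition AC_y (y : Y) (x : X) (z : Z) : R := \sum_(y' : Y) triple_y y x y' z.

Definition unique_info : R :=
  \sum_(y : Y | 0 < pY y) pY y * mutual_info (AC_y y).

Definition cond_entropy_ZY : R :=
  - \sum_(y : Y) \sum_(z : Z)
      (if pYZ y z == 0 then 0 else pYZ y z * ln (pYZ y z / pY y)).

End Info.

(* Main.v *)
Require Import Defs.
From mathcomp Require Import all_boot all_order all_algebra.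
From mathcomp Require Import reals exp.
Import Order.TTheory GRing.Theory Num.Theory.
Local Open Scope ring_scope.

Section Aux.
Variable R : realType.

Lemma sum_ge_term (I : finType) (F : I -> R) i :
  (forall j, 0 <= F j) -> F i <= \sum_j F j.
Proof.
move=> F0; rewrite (bigD1 i) //= lerDl; exact: sumr_ge0.
Qed.

Lemma mi_le (A C : finType) (q : A -> C -> R) (q0 : forall a c, 0 <= q a c) :
  mutual_info q <= - \sum_(c : C) (\sum_(a : A) q a c) * ln (\sum_(a : A) q a c).
Proof.
rewrite /mutual_info.
apply: (@le_trans _ _ (\sum_(a : A) \sum_(c : C) - (q a c * ln (\sum_(a' : A) q a' c)))).
  apply: ler_sum => a _; apply: ler_sum => c _.
  have [->|qn0] := eqVneq (q a c) 0; first by rewrite mul0r oppr0.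
  have qp : 0 < q a c by rewrite lt0r qn0 q0.
  set qa := \sum_(c' : C) q a c'.
  set m := \sum_(a' : A) q a' c.
  have qaq : q a c <= qa by rewrite /qa; apply: (@sum_ge_term _ (q a) c).
  have mq : q a c <= m by rewrite /m; apply: (@sum_ge_term _ (fun a0 => q a0 c) a).
  have qap : 0 < qa by apply: lt_le_trans qaq.
  have mp : 0 < m by apply: lt_le_trans mq.
  have -> : q a c / (qa * m) = (q a c / qa) * m^-1 by rewrite invfM mulrA.
  rewrite lnM ?posrE ?divr_gt0 ?invr_gt0 // lnV ?posrE // mulrDr mulrN -[X in _ <= X]add0r lerD2r.
  rewrite pmulr_rle0 // ln_le0 // ler_pdivrMr // mul1r //.
rewrite exchange_big /= -sumrN; apply: ler_sum => c _.
by rewrite sumrN mulr_suml.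
Qed.

End Aux.

Theorem lemma5 (R : realType) (X Y Z : finType) (P : X -> Y -> Z -> R)
  (P_ge0 : forall x y z, 0 <= P x y z)
  (P_sum1 : \sum_(x : X) \sum_(y : Y) \sum_(z : Z) P x y z = 1) :
  unique_info P <= cond_entropy_ZY P.
Proof.
have pY0 y : 0 <= pY P y by apply: sumr_ge0 => x _; apply: sumr_ge0.
have pZ0 z : 0 <= pZ P z by apply: sumr_ge0 => x _; apply: sumr_ge0.
have pYZ0 y z : 0 <= pYZ P y z by apply: sumr_ge0.
have pYZ_le y z : pYZ P y z <= pY P y.
  rewrite /pYZ /pY; apply: ler_sum => x _.
  exact: (@sum_ge_term _ _ (fun z0 => P x y z0) z).
have pYZ_leZ y z : pYZ P y z <= pZ P z.
  rewrite /pYZ /pZ; apply: ler_sum => x _.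
  exact: (@sum_ge_term _ _ (fun y0 => P x y0 z) y).
have c0 y z : 0 <= condZY P y z by apply: divr_ge0.
have AC0 y x z : 0 <= AC_y P y x z.
  apply: sumr_ge0 => y' _; rewrite /triple_y; case: ifP => // _.
  by apply: divr_ge0 => //; apply: mulr_ge0.
have marg y z : \sum_(x : X) AC_y P y x z = condZY P y z.
  rewrite /AC_y /triple_y; have [Z0|Zn0] := eqVneq (pZ P z) 0.
    rewrite big1; last by move=> x _; rewrite big1 // => y' _; rewrite Z0 eqxx.
    have : pYZ P y z = 0 by apply/eqP; rewrite eq_le pYZ0 andbT -Z0.
    by rewrite /condZY => ->; rewrite mul0r.
  under eq_bigr => x _ do rewrite -mulr_suml -mulr_suml.
  by rewrite -mulr_suml -mulr_suml -/(pZ P z) mulrC mulrA mulVf // mul1r.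
rewrite /unique_info /cond_entropy_ZY.
rewrite [X in _ <= - X](bigID (fun y => 0 < pY P y)) /= [X in _ + X]big1 ?addr0; last first.
  move=> y; rewrite lt0r pY0 andbT negbK => /eqP Y0.
  apply: big1 => z _.
  have : pYZ P y z = 0 by apply/eqP; rewrite eq_le pYZ0 andbT -Y0.
  by move=> ->; rewrite eqxx.
rewrite -sumrN; apply: ler_sum => y Ypos.
apply: (@le_trans _ _ (pY P y * - \sum_(z : Z) condZY P y z * ln (condZY P y z))).
  apply: ler_wpM2l => //; apply: (le_trans (@mi_le R _ _ _ (AC0 y))).
  rewrite lerN2; rewrite le_eqVlt; apply/orP; left; apply/eqP; apply: eq_bigr => z _; rewrite -(marg y z); reflexivity.
rewrite mulrN mulr_sumr lerN2; rewrite le_eqVlt; apply/orP; left; apply/eqP; apply: eq_bigr => z _.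
rewrite /condZY; have [->|nz] := eqVneq (pYZ P y z) 0; first by rewrite !mul0r mulr0.
by rewrite mulrA [pY P y * _]mulrC divfK // gt_eqF.
Qed.
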